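(* Let $m\ge 1$ and $k\ge 1$ be integers with $\gcd(k,\tau(m))=1$. Then $\sigma(m)$ divides $\sigma_k(m)$. In particular, if $m$ is multiperfect (i.e. $m\mid\sigma(m)$), then $m\mid\sigma_k(m)$ for every $k\ge 1$ coprime to $\tau(m)$. Consequently, if $m$ is multiperfect and $\tau(m)$ is a power of $2$, then $m\mid\sigma_k(m)$ for every odd $k\ge 1$.
   Context: For integers $k\ge 0$ and $n\ge 1$, $\sigma_k(n)=\sum_{d\mid n} d^k$, and $\sigma=\sigma_1$. $\tau(n)=\sigma_0(n)$ is the number of positive divisors of $n$. *)

(* Defs.v *)
From mathcomp Require Import all_boot.
Set Implicit Arguments. Unset Strict Implicit. Unset Printing Implicit Defensive.

Definition sigmak (k n : nat) : nat := \sum_(d <- divisors n) d ^ k.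
Definition sigma (n : nat) : nat := sigmak 1 n.
Definition tau (n : nat) : nat := size (divisors n).

(* Main.v *)
Require Import Defs.
From mathcomp Require Import all_boot zify.
Set Implicit Arguments. Unset Strict Implicit. Unset Printing Implicit Defensive.

Lemma geom_id y n : y * (\sum_(i < n) y.+1 ^ i) + 1 = y.+1 ^ n.
Proof.
elim: n => [|n IH]; first by rewrite big_ord0 muln0.
by rewrite big_ord_recr /= mulnDr addnAC IH expnS; lia.
Qed.

Lemma xn_mod x n : 0 < n -> x ^ n = 1 %[mod \sum_(i < n) x ^ i].
Proof.
move=> n0; case: x => [|y].
  by case: n n0 => // n _; rewrite big_ord_recl /= expn0 big1 ?modn1 // => i _; rewrite exp0n.
by rewrite -geom_id modnMDl.
Qed.

Lemma xmod x n j : 0 < n -> x ^ j = x ^ (j %% n) %[mod \sum_(i < n) x ^ i].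
Proof.
move=> n0; rewrite {1}(divn_eq j n) expnD mulnC (mulnC (j %/ n)) expnM.
set S := \sum_(i < n) x ^ i.
by rewrite -modnMmr -modnXm xn_mod // modnXm exp1n modnMmr muln1.
Qed.

Lemma key x n k : 0 < n -> coprime k n ->
  \sum_(i < n) x ^ i %| \sum_(i < n) (x ^ k) ^ i.
Proof.
move=> n0 co.
have h : forall i : 'I_n, (k * i) %% n < n by move=> i; rewrite ltn_pmod.
pose f (i : 'I_n) := Ordinal (h i).
have finj : injective f.
  move=> i j /(congr1 val) /= /eqP.
  wlog le_ij : i j / i <= j.
    move=> W; case: (leqP i j) => [|/ltnW] c; first exact: W.
    by rewrite eq_sym => /(W _ _ c) ->.
  rewrite eq_sym eqn_mod_dvd ?leq_mul // -mulnBr Gauss_dvdr; last by rewrite coprime_sym.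
  move=> d; apply: val_inj => /=; apply/eqP; rewrite eqn_leq le_ij /=.
  have lt : j - i < n by rewrite (leq_ltn_trans (leq_subr _ _)).
  case E: (j - i) d lt => [|t] d lt; first by lia.
  by have := dvdn_leq (ltn0Sn t) d; lia.
rewrite /dvdn; apply/eqP; rewrite -modn_summ.
under eq_bigr => i _ do rewrite -expnM (xmod x (k * i) n0).
rewrite modn_summ.
have -> : \sum_(i < n) x ^ ((k * i) %% n) = \sum_(i < n) x ^ i.
  by rewrite [RHS](reindex_inj finj).
by rewrite modnn.
Qed.

Lemma divisorsM a b : 0 < a -> 0 < b -> coprime a b ->
  perm_eq (divisors (a * b)) [seq d1 * d2 | d1 <- divisors a, d2 <- divisors b].
Proof.
move=> a0 b0 co; have ab0 : 0 < a * b by rewrite muln_gt0 a0.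
apply: uniq_perm; first exact: divisors_uniq.
  apply: allpairs_uniq; try exact: divisors_uniq.
  move=> [d1 d2] [e1 e2] /allpairsP [[x1 x2] /= [hx1 hx2 [-> ->]]].
  move=> /allpairsP [[y1 y2] /= [hy1 hy2 [-> ->]]] /= E.
  rewrite -!dvdn_divisors // in hx1 hx2 hy1 hy2.
  have g1 : forall u v, u %| a -> v %| b -> gcdn a (u * v) = u.
    move=> u v ua vb; rewrite Gauss_gcdl; first exact/gcdn_idPr.
    exact: coprime_dvdr vb co.
  have g2 : forall u v, u %| a -> v %| b -> gcdn b (u * v) = v.
    move=> u v ua vb; rewrite mulnC Gauss_gcdl; first exact/gcdn_idPr.
    by rewrite coprime_sym; exact: coprime_dvdl ua co.
  have := g1 x1 x2 hx1 hx2; have := g2 x1 x2 hx1 hx2.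
  by rewrite E g1 // g2 // => -> ->.
move=> d; rewrite -dvdn_divisors //; apply/idP/allpairsP.
  move=> dab; exists (gcdn d a, gcdn d b) => /=.
  rewrite -!dvdn_divisors // dvdn_gcdr dvdn_gcdr; split => //.
  apply/eqP; rewrite eqn_dvd; apply/andP; split; last first.
    rewrite Gauss_dvd ?dvdn_gcdl //.
    exact: coprime_dvdl (dvdn_gcdr _ _) (coprime_dvdr (dvdn_gcdr _ _) co).
  have h1 : d %| gcdn d a * b.
    by rewrite muln_gcdl dvdn_gcd dab dvdn_mulr.
  by rewrite muln_gcdr dvdn_gcd h1 dvdn_mull.
case=> -[d1 d2] [] /= h1 h2 ->; move: h1 h2; rewrite -!dvdn_divisors //; exact: dvdn_mul.
Qed.

Lemma sigmakM k a b : 0 < a -> 0 < b -> coprime a b ->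
  sigmak k (a * b) = sigmak k a * sigmak k b.
Proof.
move=> a0 b0 co; rewrite /sigmak (perm_big _ (divisorsM a0 b0 co)).
rewrite -(map_allpairs (fun p : nat * nat => p.1 * p.2) (fun x y => (x, y))) big_map.
rewrite big_allpairs big_distrl /=; apply: eq_bigr => i _.
by rewrite big_distrr; apply: eq_bigr => j _; rewrite expnMn.
Qed.

Lemma tauM a b : 0 < a -> 0 < b -> coprime a b -> tau (a * b) = tau a * tau b.
Proof.
by move=> a0 b0 co; rewrite /tau (perm_size (divisorsM a0 b0 co)) size_allpairs.
Qed.

Lemma divisorsX p a : prime p ->
  perm_eq (divisors (p ^ a)) [seq p ^ i | i <- iota 0 a.+1].
Proof.
move=> pp; have pa0 : 0 < p ^ a by rewrite expn_gt0 prime_gt0.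
apply: uniq_perm; first exact: divisors_uniq.
  by rewrite map_inj_uniq ?iota_uniq //; apply: expnI; exact: prime_gt1.
move=> d; rewrite -dvdn_divisors //; apply/dvdn_pfactor/mapP => //.
  by move=> [i ia ->]; exists i; rewrite // mem_iota /= add0n ltnS.
by move=> [i]; rewrite mem_iota /= add0n ltnS => ia ->; exists i.
Qed.

Lemma sigmakX k p a : prime p -> sigmak k (p ^ a) = \sum_(i < a.+1) (p ^ k) ^ i.
Proof.
move=> pp; rewrite /sigmak (perm_big _ (divisorsX a pp)) big_map.
have -> : iota 0 a.+1 = index_iota 0 a.+1 by rewrite /index_iota subn0.
rewrite big_mkord; apply: eq_bigr => i _; exact: expnAC.
Qed.

Lemma tauX p a : prime p -> tau (p ^ a) = a.+1.
Proof. by move=> pp; rewrite /tau (perm_size (divisorsX a pp)) size_map size_iota. Qed.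

Lemma part1 m k : 1 <= m -> coprime k (tau m) -> sigma m %| sigmak k m.
Proof.
elim/ltn_ind: m => m IH m0 co.
case: (leqP m 1) => [m1|m1].
  have -> : m = 2 ^ 0 by lia.
  by rewrite /sigma !sigmakX // big_ord1 expn0 dvd1n.
set p := pdiv m; have pp : prime p by apply: pdiv_prime.
set r := m`_p^'.
have dm : m = p ^ logn p m * r by rewrite -p_part /r partnC.
have cop : coprime (p ^ logn p m) r by rewrite -p_part coprime_partC.
have pa0 : 0 < p ^ logn p m by rewrite expn_gt0 prime_gt0.
have r0 : 0 < r by apply: part_gt0.
have la : 0 < logn p m by rewrite lognE pp (ltnW m1) pdiv_dvd.
move: co; rewrite dm /sigma !sigmakM // tauM // tauX // coprimeMr => /andP[c1 c2].
apply: dvdn_mul.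
  rewrite !sigmakX // expn1; exact: key.
apply: IH => //.
rewrite [X in _ < X]dm ltn_Pmull //.
by rewrite -(expn0 p) ltn_exp2l ?prime_gt1.
Qed.

Theorem mainTheorem5 :
  (forall m k : nat, 1 <= m -> 1 <= k -> coprime k (tau m) ->
     sigma m %| sigmak k m)
  /\ (forall m k : nat, 1 <= m -> 1 <= k -> m %| sigma m ->
        coprime k (tau m) -> m %| sigmak k m)
  /\ (forall m : nat, 1 <= m -> m %| sigma m ->
        (exists e : nat, tau m = 2 ^ e) ->
        forall k : nat, 1 <= k -> odd k -> m %| sigmak k m).
Proof.
have P2 : forall m k : nat, 1 <= m -> 1 <= k -> m %| sigma m ->
        coprime k (tau m) -> m %| sigmak k m.
  by move=> m k m0 _ ms co; apply: dvdn_trans ms (part1 m0 co).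
split; first by move=> m k m0 _; exact: part1.
split=> // m m0 ms [e te] k k0 ok.
by apply: P2 => //; rewrite te coprimeXr // coprimen2.
Qed.
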